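(* Let $m\ge1$ and $n\ge 2$. The number of interval-closed sets $I$ of $[m]\times[n]$ such that for every $a\in[m]$ there is some $b$ with $(a,b)\in I$ equals the Narayana number \[N(n+m,n)=\frac{1}{n}\binom{n+m}{n-1}\binom{n+m-1}{n-1},\] which is also the number of order ideals of $[m]\times[n-1]\times[2]$; indeed these interval-closed sets are in bijection with the order ideals of $[m]\times[n-1]\times[2]$.
   Context: $[k]$ is the chain $1<\cdots<k$; products of chains carry the componentwise order. A subset $I$ of a poset is interval-closed if for all $x,y\in I$ and $z$ with $x\le z\le y$ we have $z\in I$. *)

(* Defs.v *)
From mathcomp Require Import all_boot.
Set Implicit Arguments. Unset Strict Implicit. Unset Printing Implicit Defensive.

(* [k] is modelled by 'I_k = {0,...,k-1} with its natural order (a shift of 1..k). *)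

Definition le2 (m n : nat) (x y : 'I_m * 'I_n) : bool :=
  (x.1 <= y.1) && (x.2 <= y.2).

Definition le3 (m k l : nat) (x y : 'I_m * 'I_k * 'I_l) : bool :=
  [&& x.1.1 <= y.1.1, x.1.2 <= y.1.2 & x.2 <= y.2].

Definition interval_closed (m n : nat) (I : {set 'I_m * 'I_n}) : bool :=
  [forall x, forall y, forall z,
     [&& x \in I, y \in I, le2 x z & le2 z y] ==> (z \in I)].

Definition full_rows (m n : nat) (I : {set 'I_m * 'I_n}) : bool :=
  [forall a : 'I_m, exists b : 'I_n, (a, b) \in I].

Definition order_ideal3 (m k l : nat) (J : {set 'I_m * 'I_k * 'I_l}) : bool :=
  [forall x, forall y, (le3 x y && (y \in J)) ==> (x \in J)].

(* Main.v *)
Require Import Defs.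
From mathcomp Require Import all_boot.
From mathcomp Require Import zify.
Set Implicit Arguments. Unset Strict Implicit. Unset Printing Implicit Defensive.

Fixpoint ok (x y : nat) (s : seq (nat*nat)) : bool :=
  if s is p :: s' then [&& p.1 <= p.2, p.1 <= x, p.2 <= y & ok p.1 p.2 s'] else true.

Definition prs x y : seq (nat*nat) :=
  flatten [seq [seq (u,v) | u <- iota 0 (minn x v).+1] | v <- iota 0 y.+1].

Fixpoint gen k x y : seq (seq (nat*nat)) :=
  if k is k'.+1 then flatten [seq [seq p :: s | s <- gen k' p.1 p.2] | p <- prs x y]
  else [:: [::]].

Lemma mem_prs x y p : (p \in prs x y) = [&& p.1 <= p.2, p.1 <= x & p.2 <= y].
Proof.
case: p => u v /=; rewrite /prs; apply/flattenP/idP.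
  move=> [t /mapP [v' Hv' ->] /mapP [u' Hu' [-> ->]]].
  move: Hv' Hu'; rewrite !mem_iota /=; lia.
move=> H; exists [seq (u0,v) | u0 <- iota 0 (minn x v).+1].
  by apply/mapP; exists v => //; rewrite mem_iota; lia.
by apply/mapP; exists u => //; rewrite mem_iota; lia.
Qed.

Lemma mem_gen k x y s : (s \in gen k x y) = (size s == k) && ok x y s.
Proof.
elim: k x y s => [|k IH] x y s.
  by rewrite /= inE; case: s.
have -> : gen k.+1 x y = flatten [seq [seq p :: s0 | s0 <- gen k p.1 p.2] | p <- prs x y] by [].
apply/flattenP/idP.
  move=> [t /mapP [p Hp ->] /mapP [s' Hs' ->]].
  rewrite mem_prs in Hp; move: Hs'; rewrite IH => /andP [/eqP Hsz Hok]; rewrite /= Hsz Hok.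
  by case/and3P: Hp => -> -> ->; rewrite eqxx.
case: s => [|p s] // /andP [Hs /and4P [H1 H2 H3 H4]].
exists [seq p :: s0 | s0 <- gen k p.1 p.2].
  by apply/mapP; exists p => //; rewrite mem_prs H1 H2 H3.
by apply/mapP; exists s => //; rewrite IH -eqSS Hs; exact: H4.
Qed.

Lemma uniq_flatten_map (T U : eqType) (f : T -> seq U) s :
  uniq s -> (forall x, uniq (f x)) ->
  (forall x y z, z \in f x -> z \in f y -> x = y) ->
  uniq (flatten (map f s)).
Proof.
move=> Us Uf D; elim: s Us => [|x s IH] //= /andP [xs Us].
rewrite cat_uniq Uf IH // andbT /=.
apply/hasPn => z /flattenP [w /mapP [y ys ->] Hz]; apply/negP => Hz'.
by move: xs; rewrite (D _ _ _ Hz' Hz) ys.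
Qed.

Lemma uniq_prs x y : uniq (prs x y).
Proof.
apply: uniq_flatten_map; first exact: iota_uniq.
  move=> v; rewrite map_inj_uniq ?iota_uniq //; by move=> a b [].
by move=> a b z /mapP [u _ ->] /mapP [u' _ [_ ->]].
Qed.

Lemma uniq_gen k x y : uniq (gen k x y).
Proof.
elim: k x y => [|k IH] x y //.
apply: uniq_flatten_map; first exact: uniq_prs.
  move=> p; rewrite map_inj_uniq ?IH //; by move=> a b [].
by move=> a b z /mapP [u _ ->] /mapP [u' _ [->]].
Qed.

Definition W k x y := size (gen k x y).

Lemma W_S k x y :
  W k.+1 x y = \sum_(0 <= v < y.+1) \sum_(0 <= u < (minn x v).+1) W k u v.
Proof.
rewrite /W.
have -> : gen k.+1 x y = flatten [seq [seq p :: s0 | s0 <- gen k p.1 p.2] | p <- prs x y] by [].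
rewrite size_flatten sumnE /shape -map_comp big_map /prs big_flatten.
rewrite big_map /index_iota subn0; apply: eq_bigr => v _.
by rewrite big_map subn0; apply: eq_bigr => u _ /=; rewrite size_map.
Qed.

Definition a k x := 'C(k + x, k).
Definition b k x := 'C(k + x, k.+1).
Definition c k y := if k is k'.+1 then 'C(k + y, k') else 0.

Lemma P1 k x : a k.+1 x.+1 = a k.+1 x + a k x.+1.
Proof. by rewrite /a addnS binS addSnnS. Qed.
Lemma P2 k x : b k.+1 x.+1 = b k.+1 x + a k.+1 x.
Proof. by rewrite /a /b addnS binS. Qed.
Lemma P3 k y : c k.+1 y.+1 = c k.+1 y + c k y.+1.
Proof. case: k => [|k] /=; first by rewrite !bin0. by rewrite addnS binS addSnnS. Qed.
Lemma P4 k x : c k.+1 x = a k x.+1.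
Proof. by rewrite /c /a addSnnS. Qed.
Lemma Pb k x : b k x.+1 = a k.+1 x.
Proof. by rewrite /a /b addSnnS. Qed.
Lemma a0 k : a k 0 = 1. Proof. by rewrite /a addn0 binn. Qed.
Lemma b0 k : b k 0 = 0. Proof. by rewrite /b addn0 bin_small. Qed.

Lemma hockey_a k x : \sum_(0 <= u < x.+1) a k u = a k.+1 x.
Proof.
elim: x => [|x IH]; first by rewrite big_nat1 !a0.
by rewrite big_nat_recr //= IH P1.
Qed.
Lemma hockey_b k x : \sum_(0 <= u < x.+1) b k u = b k.+1 x.
Proof.
elim: x => [|x IH]; first by rewrite big_nat1 !b0.
by rewrite big_nat_recr //= IH P2 Pb.
Qed.

Lemma Wclosed k x y : x <= y -> W k x y + b k x * c k y = a k x * a k y.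
Proof.
elim: k x y => [|k IH] x y xy.
  by rewrite /W /= muln0 /a !add0n !bin0.
pose S' x v := \sum_(0 <= u < x.+1) W k u v.
have HS x0 v : x0 <= v -> S' x0 v + b k.+1 x0 * c k v = a k.+1 x0 * a k v.
  move=> xv; rewrite -hockey_a -hockey_b !big_distrl /= -big_split /=.
  apply: eq_big_nat => u /andP [_ Hu]; apply: IH; lia.
have WS x0 y0 : W k.+1 x0 y0 = \sum_(0 <= v < y0.+1) S' (minn x0 v) v by rewrite W_S.
have diag : forall x0, W k.+1 x0 x0 + b k.+1 x0 * c k.+1 x0 = a k.+1 x0 * a k.+1 x0.
  elim => [|x0 IHx].
    rewrite WS big_nat1 /S' big_nat1 b0 a0 /=.
    have := IH 0 0 (leqnn 0); rewrite b0 a0 /=; lia.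
  have E : W k.+1 x0.+1 x0.+1 = W k.+1 x0 x0 + S' x0.+1 x0.+1.
    rewrite !WS big_nat_recr //= minnn; congr (_ + _).
    apply: eq_big_nat => v /andP [_ Hv]; congr (S' _ _); lia.
  have := HS x0.+1 x0.+1 (leqnn _).
  rewrite E P1 P2 P3 P4 => H; rewrite P4 in IHx; lia.
have [d ->] : exists d, y = x + d by exists (y - x); lia.
elim: d {xy} => [|d IHd]; first by rewrite addn0 diag.
have E : W k.+1 x (x + d).+1 = W k.+1 x (x + d) + S' x (x + d).+1.
  rewrite !WS big_nat_recr //=; congr (_ + _); congr (S' _ _); lia.
have := HS x (x + d).+1 ltac:(lia).
rewrite addnS E P1 P3; lia.
Qed.

Lemma final m q : 1 <= m ->
  q.+1 * W m q q = 'C(q.+1 + m, q.+1 - 1) * 'C(q.+1 + m - 1, q.+1 - 1).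
Proof.
case: m => [|m'] // _; set m := m'.+1.
have h3 := Wclosed m (leqnn q).
rewrite /a /b /c in h3.
set A := 'C(m + q, m) in h3; set B := 'C(m + q, m.+1) in h3; set C := 'C(m + q, m') in h3.
have h1 : m.+1 * B = q * A by rewrite /B mul_bin_left; congr (_ * _); lia.
have h2 : m * A = q.+1 * C by rewrite /A /m mul_bin_left; congr (_ * _); lia.
have eD : 'C(q.+1 + m, q.+1 - 1) = 'C(q.+1 + m, m.+1).
  rewrite -(@bin_sub (q.+1 + m) m.+1); last by lia. congr 'C(_, _); lia.
have h4 : (q.+1 + m) * A = m.+1 * 'C(q.+1 + m, m.+1).
  rewrite -mul_bin_diag /A; congr (_ * 'C(_, _)); lia.
have eE : 'C(q.+1 + m - 1, q.+1 - 1) = A.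
  rewrite /A -(@bin_sub (m + q) m); last by lia. congr 'C(_, _); lia.
rewrite eD eE.
apply/eqP; rewrite -(@eqn_pmul2l m.+1) //; apply/eqP.
have k1 : (m.+1 * B) * (q.+1 * C) = (q * A) * (m * A) by rewrite h1 h2.
have k2 : m.+1 * q.+1 * (W m q q + B * C) = m.+1 * q.+1 * (A * A) by rewrite h3.
have k3 : (q.+1 + m) * A * A = m.+1 * 'C(q.+1 + m, m.+1) * A by rewrite h4.
lia.
Qed.

Notation nt s i := (nth (0,0) s i).

Lemma ok_nth x y s :
  ok x y s <->
  [/\ (forall i, i < size s -> (nt s i).1 <= (nt s i).2),
      (forall i j, i <= j -> j < size s -> (nt s j).1 <= (nt s i).1 /\ (nt s j).2 <= (nt s i).2)
    & (forall i, i < size s -> (nt s i).1 <= x /\ (nt s i).2 <= y)].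
Proof.
elim: s x y => [|p s IH] x y /=; first by split.
split.
  move=> /and4P [H1 H2 H3 /IH [K1 K2 K3]]; split.
  - by case=> [|i] //= /K1.
  - case=> [|i] [|j] //= ij jl.
      by have [] := K3 j jl.
    by apply: K2.
  - case=> [|i] //= il; have [] := K3 i il; lia.
move=> [K1 K2 K3].
have [H2 H3] := K3 0 isT.
rewrite (K1 0 isT) H2 H3 /=; apply/IH; split.
- by move=> i il; apply: (K1 i.+1).
- by move=> i j ij jl; apply: (K2 i.+1 j.+1).
- by move=> i il; apply: (K2 0 i.+1).
Qed.

Lemma card_by_list (X : eqType) (T : finType) (A : {set T}) (G : seq X) (f : X -> T) :
  uniq G -> {in G &, injective f} -> (forall t, (t \in A) = (t \in map f G)) ->
  #|A| = size G.
Proof.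
move=> UG If HA; rewrite -(size_map f).
have -> : #|A| = #|map f G| by apply: eq_card => t; rewrite HA.
by apply/card_uniqP; rewrite map_inj_in_uniq.
Qed.

Lemma mem_genq m q s : (s \in gen m q q) <->
  [/\ size s = m, (forall i, i < m -> (nt s i).1 <= (nt s i).2 <= q)
    & (forall i j, i <= j -> j < m -> (nt s j).1 <= (nt s i).1 /\ (nt s j).2 <= (nt s i).2)].
Proof.
rewrite mem_gen; split.
  move=> /andP [/eqP Hs /ok_nth [K1 K2 K3]]; subst m; split=> //.
  move=> i il; have := K1 i il; have := K3 i il; lia.
move=> [Hs K1 K2]; rewrite Hs eqxx /=; apply/ok_nth; subst m; split=> //.
  by move=> i /K1 /andP [].
by move=> i /K1; lia.
Qed.

Section ISide.
Variables m n : nat.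

Definition psiI (s : seq (nat*nat)) : {set 'I_m * 'I_n} :=
  [set p : 'I_m * 'I_n | (nt s p.1).1 <= p.2 <= (nt s p.1).2].

Definition inrow (I : {set 'I_m * 'I_n}) (a : 'I_m) (b : nat) : bool :=
  [exists b' : 'I_n, ((b' : nat) == b) && ((a, b') \in I)].

Lemma inrowP I a (b : 'I_n) : inrow I a b = ((a, b) \in I).
Proof.
apply/existsP/idP => [[b' /andP [/eqP E H]]|H]; last by exists b; rewrite eqxx.
by have -> : b = b' by apply: val_inj.
Qed.

Lemma inrow_lt I a b : inrow I a b -> b < n.
Proof. by rewrite /inrow => /existsP [b' /andP [/eqP E _]]; rewrite -E; apply: ltn_ord. Qed.

Lemma ic_nat I : interval_closed I -> forall (a c a' : 'I_m) b1 d b2,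
  inrow I a b1 -> inrow I a' b2 -> a <= c <= a' -> b1 <= d <= b2 -> inrow I c d.
Proof.
rewrite /inrow; move=> hI a c a' b1 d b2 /existsP [w1 /andP [/eqP E1 H1]] /existsP [w2 /andP [/eqP E2 H2]] ac bd.
have dn : d < n by have := ltn_ord w2; lia.
apply/existsP; exists (Ordinal dn); rewrite eqxx /=.
move/forallP: hI => /(_ (a, w1)) /forallP /(_ (a', w2)) /forallP /(_ (c, Ordinal dn)) /implyP.
apply; rewrite H1 H2 /le2 /=; rewrite -E1 -E2 in bd; apply/and3P; split; try apply/andP; try split; lia.
Qed.

Lemma row_char I : interval_closed I -> full_rows I -> forall a : 'I_m,
  exists f : nat * nat, f.1 <= f.2 < n /\ forall b, inrow I a b = (f.1 <= b <= f.2).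
Proof.
move=> hI /forallP hF a.
have [b0 Hb0] := existsP (hF a).
have ex : exists b, inrow I a b by exists b0; rewrite inrowP.
have ub : forall b, inrow I a b -> b <= n.-1 by move=> b /inrow_lt; lia.
case: (ex_minnP ex) => u Hu minu.
case: (ex_maxnP ex ub) => v Hv maxv.
exists (u, v) => /=; split.
  have := minu v Hv; have := inrow_lt Hv; lia.
move=> b; apply/idP/idP => [Hb|Hb].
  by rewrite (minu b Hb) (maxv b Hb).
by apply: (ic_nat hI Hu Hv) => //; rewrite leqnn.
Qed.

Lemma cardI q : n = q.+1 ->
  #|[set I : {set 'I_m * 'I_n} | interval_closed I && full_rows I]| = W m q q.
Proof.
move=> En; apply: (@card_by_list _ _ _ (gen m q q) psiI); first exact: uniq_gen.
- move=> s t /mem_genq [Ss K1s K2s] /mem_genq [St K1t K2t] E.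
  apply: (@eq_from_nth _ (0,0)); first by rewrite Ss St.
  move=> i; rewrite Ss => il.
  have R : forall b : 'I_n, ((nt s i).1 <= b <= (nt s i).2) = ((nt t i).1 <= b <= (nt t i).2).
    move=> b; have := congr1 (fun X : {set 'I_m * 'I_n} => (Ordinal il, b) \in X) E.
    by rewrite !inE.
  have := K1s i il; have := K1t i il.
  case: (nt s i) R => u v; case: (nt t i) => u' v' /= R /andP [H1 H1'] /andP [H2 H2'].
  have ltu : u < n by lia. have ltv : v < n by lia.
  have ltu' : u' < n by lia. have ltv' : v' < n by lia.
  have F1 : forall b, b < n -> (u <= b <= v) = (u' <= b <= v') by move=> b bn; exact: (R (Ordinal bn)).
  have /andP [g1 g1'] : u' <= u <= v' by rewrite -F1 // leqnn.
  have /andP [g2 g2'] : u' <= v <= v' by rewrite -F1 // leqnn andbT.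
  have /andP [g3 g3'] : u <= u' <= v by rewrite F1 // leqnn.
  have /andP [g4 g4'] : u <= v' <= v by rewrite F1 // leqnn andbT.
  f_equal; lia.
move=> I; rewrite inE; apply/idP/idP; last first.
  move=> /mapP [s /mem_genq [Ss K1 K2] ->]; apply/andP; split.
    apply/forallP => -[x1 x2]; apply/forallP => -[y1 y2]; apply/forallP => -[z1 z2]; apply/implyP.
    move=> /and4P [Hx Hy /andP [/= x1z1 x2z2] /andP [/= z1y1 z2y2]].
    rewrite !inE /= in Hx Hy *.
    have [k1 k2] := K2 x1 z1 x1z1 (ltn_ord _).
    have [k3 k4] := K2 z1 y1 z1y1 (ltn_ord _).
    move/andP: Hx => [Hx1 Hx2]; move/andP: Hy => [Hy1 Hy2].
    apply/andP; split; lia.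
  apply/forallP => a; apply/existsP.
  have /andP [h h'] := K1 a (ltn_ord a).
  have lt : (nt s a).1 < n by lia.
  by exists (Ordinal lt); rewrite inE /= leqnn h.
move=> /andP [hI hF].
have /fin_all_exists [f Hf] := row_char hI hF.
have nthf : forall i : 'I_m, nt (map f (enum 'I_m)) i = f i.
  by move=> i; rewrite (nth_map i) ?size_enum_ord // nth_ord_enum.
apply/mapP; exists (map f (enum 'I_m)); last first.
  apply/setP => [[a b]]; rewrite inE /= nthf -inrowP; exact: ((Hf a).2 b).
apply/mem_genq; split; first by rewrite size_map size_enum_ord.
  move=> i il; have := nthf (Ordinal il); rewrite /= => ->.
  have [/andP [h1 h2] _] := Hf (Ordinal il); apply/andP; split; lia.
move=> i j ij jl.
have il : i < m by lia.
have := nthf (Ordinal il); have := nthf (Ordinal jl); rewrite /= => -> ->.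
have [/andP [hi1 hi2] Ri] := Hf (Ordinal il).
have [/andP [hj1 hj2] Rj] := Hf (Ordinal jl).
case: (f (Ordinal il)) hi1 hi2 Ri => u v /= hi1 hi2 Ri.
case: (f (Ordinal jl)) hj1 hj2 Rj => u' v' /= hj1 hj2 Rj.
case: (leqP u v') => [uv'|vu]; last by lia.
have Iu : inrow I (Ordinal il) u by rewrite Ri leqnn.
have Iv' : inrow I (Ordinal jl) v' by rewrite Rj leqnn andbT.
have A1 := ic_nat hI (c := Ordinal il) (d := v') Iu Iv'.
have A2 := ic_nat hI (c := Ordinal jl) (d := u) Iu Iv'.
rewrite Ri in A1; rewrite Rj in A2.
have /andP [_ r1] : u <= v' <= v by apply: A1; rewrite /= ?leqnn ?ij ?uv'.
have /andP [r2 _] : u' <= u <= v' by apply: A2; rewrite /= ?leqnn ?ij ?uv'.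
by split.
Qed.


End ISide.

Section JSide.
Variables m k : nat.
Implicit Types J : {set 'I_m * 'I_k * 'I_2}.

Definition psiJ (s : seq (nat*nat)) : {set 'I_m * 'I_k * 'I_2} :=
  [set p : 'I_m * 'I_k * 'I_2 | (p.1.2 : nat) <
     (if (p.2 : nat) == 0 then (nt s p.1.1).2 else (nt s p.1.1).1)].

Definition inlev J (a : 'I_m) (c : 'I_2) (b : nat) : bool :=
  [exists b' : 'I_k, ((b' : nat) == b) && ((a, b', c) \in J)].

Lemma inlevP J a c (b : 'I_k) : inlev J a c b = ((a, b, c) \in J).
Proof.
apply/existsP/idP => [[b' /andP [/eqP E H]]|H]; last by exists b; rewrite eqxx.
by have -> : b = b' by apply: val_inj.
Qed.

Lemma inlev_lt J a c b : inlev J a c b -> b < k.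
Proof. by rewrite /inlev => /existsP [b' /andP [/eqP E _]]; rewrite -E; apply: ltn_ord. Qed.

Lemma down_nat J : order_ideal3 J -> forall (a a' : 'I_m) (c c' : 'I_2) b b',
  (a : nat) <= a' -> (c : nat) <= c' -> b <= b' -> inlev J a' c' b' -> inlev J a c b.
Proof.
move=> hJ a a' c c' b b' aa cc bb /existsP [w /andP [/eqP E H]].
have bk : b < k by have := ltn_ord w; lia.
apply/existsP; exists (Ordinal bk); rewrite eqxx /=.
move/forallP: hJ => /(_ (a, Ordinal bk, c)) /forallP /(_ (a', w, c')) /implyP; apply.
rewrite H andbT /le3 /=; apply/and3P; split => //; lia.
Qed.

Lemma level_char J : order_ideal3 J -> forall p : 'I_m * 'I_2,
  exists w, w <= k /\ forall b, inlev J p.1 p.2 b = (b < w).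
Proof.
move=> hJ [a c] /=.
pose P b := (k <= b) || ~~ inlev J a c b.
have ex : exists b, P b by exists k; rewrite /P leqnn.
case: (ex_minnP ex) => w Pw minw.
have wk : w <= k by apply: minw; rewrite /P leqnn.
exists w; split => // b; apply/idP/idP => [Hb|Hb].
  rewrite ltnNge; apply/negP => wb.
  have bk := inlev_lt Hb.
  move: Pw; rewrite /P; case/orP => [|/negP []]; first by lia.
  by apply: (down_nat hJ (leqnn a) (leqnn c) wb Hb).
have : ~~ P b by apply/negP => /minw; lia.
by rewrite /P negb_or negbK => /andP [].
Qed.

Definition c0 : 'I_2 := ord0.
Definition c1 : 'I_2 := Ordinal (isT : 1 < 2).

Lemma cardJ : #|[set J : {set 'I_m * 'I_k * 'I_2} | order_ideal3 J]| = W m k k.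
Proof.
apply: (@card_by_list _ _ _ (gen m k k) psiJ); first exact: uniq_gen.
- move=> s t /mem_genq [Ss K1s K2s] /mem_genq [St K1t K2t] E.
  apply: (@eq_from_nth _ (0,0)); first by rewrite Ss St.
  move=> i; rewrite Ss => il.
  have R : forall (b : 'I_k) (c : 'I_2),
      ((b : nat) < (if (c : nat) == 0 then (nt s i).2 else (nt s i).1)) =
      ((b : nat) < (if (c : nat) == 0 then (nt t i).2 else (nt t i).1)).
    move=> b c; have := congr1 (fun X : {set 'I_m * 'I_k * 'I_2} => (Ordinal il, b, c) \in X) E.
    by rewrite !inE.
  have := K1s i il; have := K1t i il.
  case: (nt s i) R => u v; case: (nt t i) => u' v' /= R /andP [H1 H1'] /andP [H2 H2'].
  have F0 : forall b, b < k -> (b < v) = (b < v') by move=> b bk; exact: (R (Ordinal bk) c0).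
  have F1 : forall b, b < k -> (b < u) = (b < u') by move=> b bk; exact: (R (Ordinal bk) c1).
  have eq1 : u = u'.
    apply/eqP; rewrite eqn_leq; apply/andP; split; rewrite leqNgt; apply/negP => H.
      by have := F1 u' ltac:(lia); rewrite H ltnNge leqnn.
    by have := F1 u ltac:(lia); rewrite H ltnNge leqnn.
  have eq2 : v = v'.
    apply/eqP; rewrite eqn_leq; apply/andP; split; rewrite leqNgt; apply/negP => H.
      by have := F0 v' ltac:(lia); rewrite H ltnNge leqnn.
    by have := F0 v ltac:(lia); rewrite H ltnNge leqnn.
  by rewrite eq1 eq2.
move=> J; rewrite inE; apply/idP/idP; last first.
  move=> /mapP [s /mem_genq [Ss K1 K2] ->].
  apply/forallP => -[[x1 x2] x3]; apply/forallP => -[[y1 y2] y3]; apply/implyP.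
  rewrite /le3 !inE /= => /andP [/and3P [h1 h2 h3] Hy].
  have [k1 k2] := K2 x1 y1 h1 (ltn_ord _).
  have /andP [g1 g2] := K1 y1 (ltn_ord _).
  move: h3 Hy; case: x3 => [[|[|x3]] Hx3] //=; case: y3 => [[|[|y3]] Hy3] //= _; lia.
move=> hJ.
have /fin_all_exists [w Hw] := level_char hJ.
pose f (a : 'I_m) := (w (a, c1), w (a, c0)).
have nthf : forall i : 'I_m, nt (map f (enum 'I_m)) i = f i.
  by move=> i; rewrite (nth_map i) ?size_enum_ord // nth_ord_enum.
have mono : forall (i j : 'I_m) c, (i : nat) <= j -> w (j, c) <= w (i, c).
  move=> i j c ij; rewrite leqNgt; apply/negP => H.
  have [wk R] := Hw (j, c); have [wk' R'] := Hw (i, c).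
  have : inlev J i c (w (i, c)).
    by apply: (down_nat hJ ij (leqnn c) (leqnn _)); rewrite [inlev _ _ _ _]R.
  by rewrite [inlev _ _ _ _]R' ltnn.
have uv : forall i : 'I_m, w (i, c1) <= w (i, c0).
  move=> i; rewrite leqNgt; apply/negP => H.
  have [wk R] := Hw (i, c1); have [wk' R'] := Hw (i, c0).
  have : inlev J i c0 (w (i, c0)).
    by apply: (down_nat hJ (leqnn (i : nat)) (isT : (c0 : nat) <= c1) (leqnn _)); rewrite [inlev _ _ _ _]R.
  by rewrite [inlev _ _ _ _]R' ltnn.
apply/mapP; exists (map f (enum 'I_m)); last first.
  apply/setP => -[[a b] c]; rewrite inE /= nthf -inlevP /f /=.
  have [_ R] := Hw (a, c); rewrite [inlev _ _ _ _]R /=; clear R.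
  case: c => [[|[|c]] Hc] //=.
    by have -> : Ordinal Hc = c0 by apply: val_inj.
  by have -> : Ordinal Hc = c1 by apply: val_inj.
apply/mem_genq; split; first by rewrite size_map size_enum_ord.
  move=> i il; have := nthf (Ordinal il); rewrite /= => ->; rewrite /f /= uv /=.
  by have [] := Hw (Ordinal il, c0).
move=> i j ij jl.
have il : i < m by lia.
have := nthf (Ordinal il); have := nthf (Ordinal jl); rewrite /= => -> ->.
rewrite /f /=; split; apply: mono => //.
Qed.

End JSide.

Theorem theorem4p4 (m n : nat) (hm : 1 <= m) (hn : 2 <= n) :
  n * #|[set I : {set 'I_m * 'I_n} | interval_closed I && full_rows I]|
    = 'C(n + m, n - 1) * 'C(n + m - 1, n - 1)
  /\ #|[set I : {set 'I_m * 'I_n} | interval_closed I && full_rows I]|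
    = #|[set J : {set 'I_m * 'I_(n - 1) * 'I_2} | order_ideal3 J]|.
Proof.
case: n hn => [|q] // hq.
have E := @cardI m q.+1 q erefl.
rewrite E cardJ; split; first exact: final.
by rewrite subn1.
Qed.
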